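(* Let $k\ge1$ and $\ell\ge0$. Then $$\min\{n\in A_{2k}:\max\mathcal{CG}(n)=\max\mathcal{CG}_2(n)=F_{2k+2\ell}\}>\max\{n\in A_{2k}:\max\mathcal{CG}(n)=\max\mathcal{CG}_1(n)=F_{2k+2\ell}\}.$$
   Context: Fibonacci numbers: $F_1=F_2=1$, $F_{n+1}=F_n+F_{n-1}$ for $n\ge2$. Chung–Graham decomposition: every positive integer $n$ has a unique representation $n=\sum_{i\ge1}c_iF_{2i}$ with $c_i\in\{0,1,2\}$, only finitely many nonzero, such that whenever $c_i=c_j=2$ with $i<j$ there is $k$ with $i<k<j$ and $c_k=0$. Let $\mathcal{CG}(n)$ be the set of $F_{2i}$ with $c_i\neq0$, $\mathcal{CG}_1(n)$ the set of $F_{2i}$ with $c_i=1$, and $\mathcal{CG}_2(n)$ the set of $F_{2i}$ with $c_i=2$. For $k\ge1$, $A_{2k}=\{n\ge1:\min\mathcal{CG}(n)=F_{2k}\}$. *)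

(* Defs.v *)
From mathcomp Require Import all_boot.
Set Implicit Arguments. Unset Strict Implicit. Unset Printing Implicit Defensive.

Fixpoint fib (n : nat) : nat :=
  match n with
  | 0 => 0
  | 1 => 1
  | S ((S m) as p) => fib p + fib m
  end.

(* A coefficient sequence c = [:: c_1; c_2; ...; c_L]; cgc c i = c_i for i >= 1
   (and 0 beyond the end of the sequence). *)
Definition cgc (c : seq nat) (i : nat) : nat := nth 0 c i.-1.

Definition is_CG_rep (n : nat) (c : seq nat) : Prop :=
  [/\ (forall i, 1 <= i -> cgc c i <= 2),
      n = \sum_(1 <= i < (size c).+1) cgc c i * fib (2 * i)
    & (forall i j, 1 <= i -> i < j -> cgc c i = 2 -> cgc c j = 2 ->
         exists2 k, i < k < j & cgc c k = 0)].

Definition CG (c : seq nat) (x : nat) : Prop :=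
  exists i, [/\ 1 <= i, cgc c i != 0 & x = fib (2 * i)].
Definition CG1 (c : seq nat) (x : nat) : Prop :=
  exists i, [/\ 1 <= i, cgc c i == 1 & x = fib (2 * i)].
Definition CG2 (c : seq nat) (x : nat) : Prop :=
  exists i, [/\ 1 <= i, cgc c i == 2 & x = fib (2 * i)].

Definition is_min (P : nat -> Prop) (x : nat) : Prop :=
  P x /\ forall y, P y -> x <= y.
Definition is_max (P : nat -> Prop) (x : nat) : Prop :=
  P x /\ forall y, P y -> y <= x.

(* n in A_{2k} with max CG(n) = max CG_2(n) = F_{2k+2l}. *)
Definition S2 (k l n : nat) : Prop :=
  exists c, is_CG_rep n c /\
    [/\ 1 <= n, is_min (CG c) (fib (2 * k)),
        is_max (CG c) (fib (2 * k + 2 * l))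
      & is_max (CG2 c) (fib (2 * k + 2 * l))].

(* n in A_{2k} with max CG(n) = max CG_1(n) = F_{2k+2l}. *)
Definition S1 (k l n : nat) : Prop :=
  exists c, is_CG_rep n c /\
    [/\ 1 <= n, is_min (CG c) (fib (2 * k)),
        is_max (CG c) (fib (2 * k + 2 * l))
      & is_max (CG1 c) (fib (2 * k + 2 * l))].

(* Main.v *)
Require Import Defs.
From mathcomp Require Import all_boot.
From mathcomp Require Import zify.

Definition T (c : seq nat) (j : nat) := \sum_(1 <= i < j.+1) cgc c i * fib (2 * i).

Lemma fib_pos n : 0 < fib n.+1.
Proof. elim: n => // n IH; have -> : fib n.+2 = fib n.+1 + fib n by []. lia. Qed.

Lemma fib2S j : fib (2 * j) < fib (2 * j.+1).
Proof.
rewrite mulnS add2n.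
have -> : fib (2 * j).+2 = fib (2 * j).+1 + fib (2 * j) by [].
have := fib_pos (2 * j); lia.
Qed.

Lemma fib2_lt i j : i < j -> fib (2 * i) < fib (2 * j).
Proof.
elim: j => // j IH; rewrite ltnS leq_eqVlt => /orP[/eqP->|/IH h].
  exact: fib2S.
exact: ltn_trans h (fib2S j).
Qed.

Lemma fib2_le i j : i <= j -> fib (2 * i) <= fib (2 * j).
Proof. rewrite leq_eqVlt => /orP[/eqP->//|/(fib2_lt _ _)]; exact: ltnW. Qed.

Lemma fib2_inj i j : fib (2 * i) = fib (2 * j) -> i = j.
Proof.
case: (ltngtP i j) => // h e.
  by have := fib2_lt _ _ h; rewrite e ltnn.
by have := fib2_lt _ _ h; rewrite e ltnn.
Qed.

Lemma TS c j : T c j.+1 = T c j + cgc c j.+1 * fib (2 * j.+1).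
Proof. by rewrite /T big_nat_recr. Qed.

Lemma Tbound c : (forall i, 1 <= i -> cgc c i <= 2) ->
  (forall i j, 1 <= i -> i < j -> cgc c i = 2 -> cgc c j = 2 ->
         exists2 k, i < k < j & cgc c k = 0) ->
  forall j, T c j < fib (2 * j).+2 /\
   ((forall i, 1 <= i <= j -> cgc c i = 2 -> exists2 z, i < z <= j & cgc c z = 0)
     -> T c j < fib (2 * j).+1).
Proof.
move=> Hle Hsep; elim=> [|j [IH1 IH2]].
  by rewrite /T big_geq.
rewrite TS.
rewrite mulnS add2n.
have e1 : fib (2 * j).+2 = fib (2 * j).+1 + fib (2 * j) by [].
have e2 : fib (2 * j).+3 = fib (2 * j).+2 + fib (2 * j).+1 by [].
have e3 : fib (2 * j).+4 = fib (2 * j).+3 + fib (2 * j).+2 by [].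
rewrite e3 e2 e1; rewrite e1 in IH1.
have := Hle j.+1 isT.
case E: (cgc c j.+1) => [|[|[|x]]] // _.
- split=> [|_]; lia.
- split; first lia.
  move=> H; suff: T c j < fib (2 * j).+1 by lia.
  apply: IH2 => i /andP[i1 ij] ci.
  have [|z /andP[iz zj] cz] := H i _ ci; first by rewrite i1 /=; lia.
  exists z => //; rewrite iz /=; move: zj; rewrite leq_eqVlt => /orP[/eqP ez|]//.
  by move: cz; rewrite ez E.
- suff: T c j < fib (2 * j).+1.
    split; first lia.
    move=> H2; have [|z /andP[iz zj] _] := H2 j.+1 _ E; first by rewrite leqnn.
    lia.
  apply: IH2 => i /andP[i1 ij] ci.
  have [z /andP[iz zj] cz] := Hsep i j.+1 i1 ij ci E.
  by exists z => //; rewrite iz.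
Qed.

Lemma T_split c j j' : j <= j' ->
  T c j' = T c j + \sum_(j.+1 <= i < j'.+1) cgc c i * fib (2 * i).
Proof. by move=> h; rewrite /T -big_cat_nat. Qed.

Lemma cgc_big c i : size c < i -> cgc c i = 0.
Proof. by move=> h; rewrite /cgc nth_default //; case: i h => //= i; rewrite ltnS. Qed.

Lemma extract c K v : 1 <= K -> v != 0 -> is_max (CG c) (fib (2 * K)) ->
  (exists i, [/\ 1 <= i, cgc c i == v & fib (2 * K) = fib (2 * i)]) ->
  cgc c K = v /\ (forall i, K < i -> cgc c i = 0) /\ K <= size c.
Proof.
move=> K1 v0 [_ Hmax] [i [i1 /eqP ci /fib2_inj ei]].
subst i.
have hz : forall i, K < i -> cgc c i = 0.
  move=> i Ki; apply/eqP; apply/negPn/negP => nz.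
  have := Hmax (fib (2 * i)) (ex_intro _ i (And3 (ltnW (leq_ltn_trans K1 Ki)) nz erefl)).
  by rewrite leqNgt fib2_lt.
split=> //; split=> //.
rewrite leqNgt; apply/negP => h.
by move: ci; rewrite cgc_big // => e; move: v0; rewrite -e.
Qed.

Lemma sum_value c n K : is_CG_rep n c -> 1 <= K -> K <= size c ->
  (forall i, K < i -> cgc c i = 0) ->
  n = T c K.-1 + cgc c K * fib (2 * K).
Proof.
move=> [_ -> _] K1 Ks hz.
rewrite -/(T c (size c)) (T_split c _ _ Ks).
rewrite big_nat_cond big1; last by move=> i /andP[/andP[h _] _]; rewrite hz.
by case: K K1 Ks hz => // K _ _ _; rewrite addn0 TS.
Qed.

Section Wit.
Variables (k l v : nat).
Let K := k + l.
Definition gw i := if i == K then v else if i == k then 1 else 0.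
Definition cw := mkseq (fun j => gw j.+1) K.

Lemma cgc_cw i : 1 <= i -> cgc cw i = if i <= K then gw i else 0.
Proof.
rewrite /cgc; case: i => // i _ /=.
case: ltnP => h; first by rewrite nth_mkseq.
by rewrite nth_default // size_mkseq.
Qed.
End Wit.

Lemma witness k l v : 1 <= k -> 1 <= v <= 2 ->
  exists c, [/\ is_CG_rep (T c (k + l)) c, 1 <= T c (k + l),
    is_min (CG c) (fib (2 * k)), is_max (CG c) (fib (2 * (k + l)))
    & cgc c (k + l) = v /\ (forall i, 1 <= i -> cgc c i != 0 -> i <= k + l)].
Proof.
move=> k1 /andP[v1 v2].
set K := k + l.
have K1 : 1 <= K by rewrite /K; lia.
have cK : cgc (cw k l v) K = v by rewrite cgc_cw // leqnn /gw eqxx.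
have nzK : forall i, 1 <= i -> cgc (cw k l v) i != 0 -> (i <= K) && ((i == K) || (i == k)).
  move=> i i1; rewrite cgc_cw //; case: (leqP i K) => //= _.
  rewrite /gw; case: (i == K) => //; by case: (i == k).
exists (cw k l v); split.
- split.
  + move=> i i1; rewrite cgc_cw //; case: ifP => // _; rewrite /gw.
    case: ifP => // _; by case: ifP.
  + by rewrite size_mkseq.
  + move=> i j i1 ij ci cj; exfalso.
    have h2 : forall i, 1 <= i -> cgc (cw k l v) i = 2 -> i = K.
      move=> x x1; rewrite cgc_cw //; case: ifP => // _; rewrite /gw.
      case: eqP => // _; by case: ifP.
    have := h2 i i1 ci; have := h2 j (leq_trans i1 (ltnW ij)) cj.
    lia.
- case: K K1 cK {nzK} => // K' _ cK; rewrite TS cK.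
  have := fib_pos (2 * K').+1.
  have -> : (2 * K'.+1) = (2 * K').+1.+1 by rewrite mulnS add2n.
  nia.
- split.
  + exists k; split => //; rewrite cgc_cw // /gw.
    have -> : k <= K by rewrite /K leq_addr.
    by rewrite eqxx; case: (k == k + l); rewrite -?lt0n.
  + move=> y [i [i1 ci ->]]; apply: fib2_le.
    move: (nzK i i1 ci) => /andP[_ /orP[/eqP->|/eqP->//]].
    by rewrite /K leq_addr.
- split; first by exists K; split => //; rewrite cK -lt0n.
  move=> y [i [i1 ci ->]]; apply: fib2_le.
  by move: (nzK i i1 ci) => /andP[].
- split; first exact cK.
  by move=> i i1 ci; move: (nzK i i1 ci) => /andP[].
Qed.

Theorem lemma3p5 (k l : nat) : 1 <= k ->
  [/\ (exists n, S2 k l n), (exists m, S1 k l m)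
    & forall n m, S2 k l n -> S1 k l m -> m < n].
Proof.
move=> k1; rewrite /S1 /S2 -mulnDr.
have K1 : 1 <= k + l by lia.
split.
- have [c [rep n1 mn mx [cK hK]]] := witness k l 2 k1 isT.
  exists (T c (k + l)), c; split=> //; split=> //.
  split; first by exists (k + l); split => //; rewrite cK.
  by move=> y [i [i1 ci ->]]; apply: fib2_le; apply: hK => //; rewrite (eqP ci).
- have [c [rep n1 mn mx [cK hK]]] := witness k l 1 k1 isT.
  exists (T c (k + l)), c; split=> //; split=> //.
  split; first by exists (k + l); split => //; rewrite cK.
  by move=> y [i [i1 ci ->]]; apply: fib2_le; apply: hK => //; rewrite (eqP ci).
- move=> n m [c [rep [_ _ mx [[i [i1 ci ei]] _]]]] [d [repd [_ _ mxd [[j [j1 dj ej]] _]]]].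
  have [cK [cz cs]] := extract c (k+l) 2 K1 isT mx (ex_intro _ i (And3 i1 ci ei)).
  have [dK [dz ds]] := extract d (k+l) 1 K1 isT mxd (ex_intro _ j (And3 j1 dj ej)).
  rewrite (sum_value c n (k+l) rep K1 cs cz) (sum_value d m (k+l) repd K1 ds dz) cK dK.
  have [rle _ rsep] := repd.
  have [h _] := Tbound d rle rsep (k + l).-1.
  move: h; case: (k + l) K1 => // K' _.
  rewrite [_.-1]/= mulnS add2n.
  lia.
Qed.
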